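(* Let $A,B$ be strongly regular graphs with the same parameters $\sigma(A)=(n,d,\lambda,\mu)$, and let $A',B'$ be partially colored versions with port vertices $a_1,\dots,a_m$, $b_1,\dots,b_m$ as in the construction, such that $\tau(a_i)=\tau(b_i)$ for all $i$. Then for vertices $x,y$ of $G(A',B')$, the sequence $(w_k(x,y))_{k\ge0}$ is determined solely by $\eta(x,y)$, $\tau(A')$ and $\sigma(A)$: if $(\hat A',\hat B')$ is another such pair with $\sigma(\hat A)=\sigma(A)$ and $\tau(\hat A')=\tau(A')$, and $x,y\in V(G(A',B'))$, $\hat x,\hat y\in V(G(\hat A',\hat B'))$ satisfy $\eta(x,y)=\eta(\hat x,\hat y)$, then $w_k(x,y)=w_k(\hat x,\hat y)$ for all $k\ge0$.
   Context: Graphs are finite, simple and undirected. A strongly regular graph with parameters $(n,d,\lambda,\mu)$ is an $n$-vertex $d$-regular graph in which any two adjacent vertices have $\lambda$ common neighbours and any two distinct non-adjacent vertices have $\mu$ common neighbours. $A'$ (resp. $B'$) is $A$ (resp. $B$) with $a_i$ (resp. $b_i$) colored $i$ for $i=1,\dots,m$ and all other vertices uncolored. Construction $G(A',B')$ (uncolored): the vertex-disjoint union of $A$ and $B$, plus for each $i$ a connecting vertex $c_i$ adjacent to $a_i$ and $b_i$ and $i$ pendant vertices $p_{i,1},\dots,p_{i,i}$ adjacent only to $c_i$. $w_k(x,y)$ is the number of walks of length $k$ from $x$ to $y$ in $G(A',B')$. Color refinement on a vertex-colored graph $X$: $C^0_X(x)$ is the color of $x$ (common default for uncolored vertices), $C^{1}_X(x)=\big(C^0_X(x),\{\!\{C^0_X(y)\}\!\}_{y\in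 N(x)}\big)$. Types: $\tau(x)=C^1_{A'}(x)$ for $x\in V(A)$, $\tau(x)=C^1_{B'}(x)$ for $x\in V(B)$, $\tau(c_i)=(\mathfrak c,\tau(a_i))$, $\tau(p_{i,h})=(\mathfrak p,\tau(a_i))$ for special symbols $\mathfrak c,\mathfrak p$. $\tau(A')=(\tau(a_1),\dots,\tau(a_m))$. $D(x,y)=1$ iff $x,y$ both lie in the $A$-part or both in the $B$-part, else $0$; $I(x,y)=1$ iff $x=y$; $A(x,y)=1$ iff $x,y$ adjacent. $\eta(x,y)=(\tau(x),D(x,y),I(x,y),A(x,y),\tau(y))$. *)

(* Defs.v *)
From mathcomp Require Import all_boot.
Set Implicit Arguments. Unset Strict Implicit. Unset Printing Implicit Defensive.

Definition srg (V : finType) (e : rel V) (n d lam mu : nat) : Prop :=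
  [/\ symmetric e, irreflexive e & #|V| = n] /\
  [/\ (forall x, #|[pred y | e x y]| = d),
      (forall x y, x != y -> e x y -> #|[pred z | e x z && e y z]| = lam)
    & (forall x y, x != y -> ~~ e x y -> #|[pred z | e x z && e y z]| = mu)].

(* Colour of a vertex in the partially coloured graph A': port p i (i : 'I_m)
   gets colour Some i (standing for colour i+1), all other vertices None. *)
Definition pcol (V : finType) (m : nat) (p : 'I_m -> V) (x : V) : option 'I_m :=
  [pick i | p i == x].

(* C^1 colour: own colour, and the multiset of neighbour colours, the latter
   represented by its multiplicity function. *)
Definition ctype (m : nat) := (option 'I_m * {ffun option 'I_m -> nat})%type.

Definition tau1 (V : finType) (m : nat) (e : rel V) (p : 'I_m -> V) (x : V)
  : ctype m :=
  (pcol p x, [ffun c => #|[pred y | e x y && (pcol p y == c)]|]).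

(* types of vertices of G(A',B'): graph vertices, connecting vertices
   (symbol frak c), pendant vertices (symbol frak p). *)
Inductive vtype (m : nat) : Type :=
| TG of ctype m
| TC of ctype m
| TP of ctype m.

(* Vertex set of G(A',B'):  V(A) + V(B) + {c_i} + {p_(i,h)}.
   Index i : 'I_m stands for the colour i+1; c_i has i+1 pendants
   indexed by h : 'I_(i+1). *)
Definition gvert (VA VB : finType) (m : nat) : finType :=
  ((VA + VB) + 'I_m + {i : 'I_m & 'I_(i.+1)})%type.

Section G.
Variables (VA VB : finType) (m : nat) (eA : rel VA) (eB : rel VB)
          (pa : 'I_m -> VA) (pb : 'I_m -> VB).

Definition gadj : rel (gvert VA VB m) := fun u v =>
  match u, v with
  | inl (inl (inl a)), inl (inl (inl a')) => eA a a'
  | inl (inl (inr b)), inl (inl (inr b')) => eB b b'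
  | inl (inl (inl a)), inl (inr i) | inl (inr i), inl (inl (inl a)) => a == pa i
  | inl (inl (inr b)), inl (inr i) | inl (inr i), inl (inl (inr b)) => b == pb i
  | inl (inr i), inr (existT j _) | inr (existT j _), inl (inr i) => i == j
  | _, _ => false
  end.

Definition gtau (v : gvert VA VB m) : vtype m :=
  match v with
  | inl (inl (inl a)) => TG (tau1 eA pa a)
  | inl (inl (inr b)) => TG (tau1 eB pb b)
  | inl (inr i) => TC (tau1 eA pa (pa i))
  | inr (existT i _) => TP (tau1 eA pa (pa i))
  end.
End G.

Definition Dpart (VA VB : finType) (m : nat) (u v : gvert VA VB m) : bool :=
  match u, v with
  | inl (inl (inl _)), inl (inl (inl _)) => true
  | inl (inl (inr _)), inl (inl (inr _)) => true
  | _, _ => false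
  end.

Definition nwalks (V : finType) (e : rel V) (k : nat) (x y : V) : nat :=
  #|[pred s : k.-tuple V | path e x s && (last x s == y)]|.

(* Main.v *)
Require Import Defs.
From mathcomp Require Import all_boot all_algebra.
Set Implicit Arguments. Unset Strict Implicit. Unset Printing Implicit Defensive.
Import GRing.Theory Num.Theory.
Local Open Scope ring_scope.

Inductive sym (m : nat) : Type :=
| SE of bool & 'I_m | SN of bool & 'I_m | SJ of bool | SC of 'I_m | SP of 'I_m | SY | SNY.
Arguments SY {m}. Arguments SNY {m}. Arguments SJ {m}.

Definition ib (b : bool) : int := (b : nat)%:Z.
Lemma ibT : ib true = 1. Proof. by []. Qed.
Lemma ibF : ib false = 0. Proof. by []. Qed.
Lemma ib_and a b : ib (a && b) = ib a * ib b.
Proof. by case: a; case: b; rewrite /= ?mulr0 ?mulr1. Qed.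


Notation vA a := (inl (inl (inl a))).
Notation vB b := (inl (inl (inr b))).
Notation vC i := (inl (inr i)).
Notation vP i h := (inr (existT (fun k : ordinal _ => 'I_k.+1) i h)).

Lemma sum_ib1 (T : finType) (t0 : T) (F : T -> int) :
  \sum_t ib (t == t0) * F t = F t0.
Proof.
rewrite (bigD1 t0) //= eqxx mul1r big1 ?addr0 // => t /negbTE ->.
by rewrite ?ibF mul0r.
Qed.

Lemma sum_ib1' (T : finType) (t0 : T) (F : T -> int) :
  \sum_t ib (t0 == t) * F t = F t0.
Proof. by rewrite -(sum_ib1 t0); apply: eq_bigr => t _; rewrite eq_sym. Qed.

Lemma sum_mul0 (T : finType) (F : T -> int) : \sum_t F t * 0 = 0.
Proof. by rewrite big1 // => t _; rewrite mulr0. Qed.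

Lemma sum_ib1r (T : finType) (t0 : T) (F : T -> int) :
  \sum_t F t * ib (t == t0) = F t0.
Proof. by rewrite -(sum_ib1 t0); apply: eq_bigr => t _; rewrite mulrC. Qed.

Lemma sum_ib1r' (T : finType) (t0 : T) (F : T -> int) :
  \sum_t F t * ib (t0 == t) = F t0.
Proof. by rewrite -(sum_ib1r t0); apply: eq_bigr => t _; rewrite eq_sym. Qed.

Lemma sum_mul1 (T : finType) (F : T -> int) : \sum_t F t * 1 = \sum_t F t.
Proof. by apply: eq_bigr => t _; rewrite mulr1. Qed.

Lemma card_int_sum (T : finType) (P : pred T) : (#|P| : int) = \sum_x ib (P x).
Proof.
rewrite -sum1_card big_mkcond /= -natz natr_sum; apply: eq_bigr => x _.
by rewrite unfold_in; case: (P x).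
Qed.

Lemma pcolE (V : finType) m (p : 'I_m -> V) (ip : injective p) y j :
  (pcol p y == Some j) = (p j == y).
Proof.
rewrite /pcol; case: pickP => [i /eqP <- | H].
  by rewrite (inj_eq ip) eq_sym.
by rewrite H.
Qed.

Lemma pcolP (V : finType) m (p : 'I_m -> V) (ip : injective p) j :
  pcol p (p j) = Some j.
Proof. by apply/eqP; rewrite pcolE. Qed.

Lemma tau_adj (V : finType) m (e : rel V) (p : 'I_m -> V) (ip : injective p) x j :
  (tau1 e p x).2 (Some j) = e x (p j).
Proof.
rewrite /tau1 /= ffunE.
have -> : #|[pred y | e x y && (pcol p y == Some j)]| =
          #|[pred y | (y == p j) && e x (p j)]|.
  apply: eq_card => z; rewrite !inE pcolE //.
  by case: (eqVneq z (p j)) => [->|ne]; rewrite ?andbT ?andbF.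
case: (e x (p j)).
  by rewrite (eq_card (B := pred1 (p j))) ?card1 // => z; rewrite !inE /= ?andbT.
by rewrite (eq_card (B := pred0)) ?card0 // => z; rewrite !inE /= ?andbF.
Qed.

Lemma srg_deg (V : finType) (e : rel V) n d l mu :
  srg e n d l mu -> forall a, \sum_z ib (e a z) = d%:Z.
Proof.
move=> [_ [hd _ _]] a; rewrite -(hd a) card_int_sum.
by apply: eq_bigr.
Qed.

Lemma srg_common (V : finType) (e : rel V) n d l mu :
  srg e n d l mu -> forall a u, \sum_z ib (e a z) * ib (e u z) =
   (d%:Z - mu%:Z) * ib (a == u) + (l%:Z - mu%:Z) * ib (e u a) + mu%:Z.
Proof.
move=> [[se ir _] [hd hl hm]] a u.
transitivity (#|[pred z | e a z && e u z]| : int).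
  by rewrite card_int_sum; apply: eq_bigr => z _; rewrite ib_and.
case: (eqVneq a u) => [<-|ne].
  rewrite (eq_card (B := [pred z | e a z])) ?hd; last by move=> z; rewrite !inE andbb.
  by rewrite ir /= mulr1 mulr0 addr0 subrK.
case eua: (e u a).
  rewrite hl //; last by rewrite se.
  by rewrite /= mulr0 mulr1 add0r subrK.
rewrite hm //; last by rewrite se eua.
by rewrite /= !mulr0 !add0r.
Qed.

Lemma card_nat_sum (T : finType) (P : pred T) : #|P| = (\sum_x (P x : nat))%N.
Proof. rewrite -sum1_card big_mkcond /=; apply: eq_bigr => x _; by rewrite unfold_in; case: (P x). Qed.

Lemma nwalks0 (V : finType) (e : rel V) x y : nwalks e 0 x y = (x == y).
Proof.
rewrite /nwalks card_nat_sum (big_pred1 [tuple]) //= => t.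
have -> : t = [tuple] by exact: tuple0.
by [].
Qed.

Lemma nwalksS (V : finType) (e : rel V) k x y :
  nwalks e k.+1 x y = (\sum_z e x z * nwalks e k z y)%N.
Proof.
rewrite /nwalks card_nat_sum.
rewrite (reindex (fun p : V * k.-tuple V => [tuple of p.1 :: p.2])) /=; last first.
  exists (fun s : k.+1.-tuple V => (thead s, [tuple of behead s])).
    by move=> [z t] _; congr pair; apply: val_inj.
  by move=> s _; apply: val_inj => /=; case: s => [[|z t]] //=.
rewrite -(pair_bigA _ (fun z (t : k.-tuple V) => (e x z && path e z t && (last z t == y) : nat))) /=.
apply: eq_bigr => z _.
rewrite card_nat_sum big_distrr /=; apply: eq_bigr => t _.
by case: (e x z); case: (path e z t && _).
Qed.

Section Gen.
Variables (VA VB : finType) (m : nat) (eA : rel VA) (eB : rel VB)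
          (pa : 'I_m -> VA) (pb : 'I_m -> VB).
Notation V := (gvert VA VB m).
Notation G := (gadj eA eB pa pb).

Lemma sumV (F : V -> int) : \sum_z F z =
  \sum_a F (vA a) + \sum_b F (vB b) + \sum_i F (vC i) + \sum_(i : 'I_m) \sum_(h : 'I_i.+1) F (vP i h).
Proof.
rewrite big_sumType /= big_sumType /= big_sumType /=.
congr (_ + _); rewrite (sig_big_dep _ _ (fun (i : 'I_m) (h : 'I_i.+1) => F (vP i h))) /=.
by apply: eq_bigr => -[i h].
Qed.

Definition nbrs (f : V -> int) (x : V) : int :=
  match x with
  | vA a => \sum_a' ib (eA a a') * f (vA a') + \sum_i ib (a == pa i) * f (vC i)
  | vB b => \sum_b' ib (eB b b') * f (vB b') + \sum_i ib (b == pb i) * f (vC i)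
  | vC i => f (vA (pa i)) + f (vB (pb i)) + \sum_(h : 'I_i.+1) f (vP i h)
  | inr (existT i h) => f (vC i)
  end.

Lemma nbrsE (f : V -> int) x : \sum_z ib (G x z) * f z = nbrs f x.
Proof.
rewrite sumV; case: x => [[[a|b]|i]|[i h]] /=.
- rewrite [X in _ + X]big1 ?addr0; last by move=> j _; rewrite big1 // => ? _; rewrite ?ibF mul0r.
  rewrite [X in _ + X + _]big1 ?addr0 //; by move=> *; rewrite ?ibF mul0r.
- rewrite [X in _ + X]big1 ?addr0; last by move=> j _; rewrite big1 // => ? _; rewrite ?ibF mul0r.
  rewrite [X in X + _ + _]big1 ?add0r //; by move=> *; rewrite ?ibF mul0r.
- rewrite sum_ib1 sum_ib1 [X in _ + X + _]big1 ?addr0; last by move=> *; rewrite ?ibF mul0r.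
  rewrite (bigD1 i) //= [\sum_(j < m | j != i) _]big1 ?addr0; last first.
    by move=> j ji; rewrite big1 // => h' _; rewrite eq_sym (negbTE ji) ibF mul0r.
  by rewrite eqxx; congr (_ + _); apply: eq_bigr => *; rewrite ibT mul1r.
- rewrite big1 ?add0r; last by move=> *; rewrite ibF mul0r.
  rewrite big1 ?add0r; last by move=> *; rewrite ibF mul0r.
  rewrite [X in _ + X]big1 ?addr0; last by move=> j _; rewrite big1 // => *; rewrite ibF mul0r.
  by rewrite sum_ib1.
Qed.

Variables (d lam mu : nat).
Definition veq (x z : V) : bool :=
  match x, z with
  | vA a, vA a' => a == a'
  | vB b, vB b' => b == b'
  | vC i, vC j => i == j
  | inr p, inr q => p == q
  | _, _ => false
  end.

Section Y.
Variable y : V.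

Definition phi (s : sym m) (x : V) : int :=
  match s with
  | SE false i => if x is vA a then ib (a == pa i) else 0
  | SE true i => if x is vB b then ib (b == pb i) else 0
  | SN false i => if x is vA a then ib (eA (pa i) a) else 0
  | SN true i => if x is vB b then ib (eB (pb i) b) else 0
  | SJ false => if x is vA a then 1 else 0
  | SJ true => if x is vB b then 1 else 0
  | SC i => if x is vC j then ib (j == i) else 0
  | SP i => if x is inr (existT j _) then ib (j == i) else 0
  | SY => ib (veq x y)
  | SNY => ib (Dpart y x && G y x)
  end.

Definition dm : int := d%:Z - mu%:Z.
Definition lm : int := lam%:Z - mu%:Z.

Definition LEy : seq (int * sym m) :=
  match y with
  | vA a => (1, SNY) :: (if pcol pa a is Some i then [:: (1, SC i)] else [::])
  | vB b => (1, SNY) :: (if pcol pb b is Some i then [:: (1, SC i)] else [::])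
  | vC i => [:: (1, SE false i); (1, SE true i); (1, SP i)]
  | inr (existT i _) => [:: (1, SC i)]
  end.

Definition LNy : seq (int * sym m) :=
  match y with
  | vA a => (dm, SY) :: (lm, SNY) :: (mu%:Z, SJ false) ::
            [seq (ib (eA a (pa j)), SC j) | j <- enum 'I_m]
  | vB b => (dm, SY) :: (lm, SNY) :: (mu%:Z, SJ true) ::
            [seq (ib (eB b (pb j)), SC j) | j <- enum 'I_m]
  | _ => [::]
  end.

Definition Lfun (s : sym m) : seq (int * sym m) :=
  match s with
  | SE b i => [:: (1, SN b i); (1, SC i)]
  | SN b i => (dm, SE b i) :: (lm, SN b i) :: (mu%:Z, SJ b) ::
              [seq (ib (eA (pa i) (pa j)), SC j) | j <- enum 'I_m]
  | SJ b => (d%:Z, SJ b) :: [seq (1, SC j) | j <- enum 'I_m]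
  | SC i => [:: (1, SE false i); (1, SE true i); (1, SP i)]
  | SP i => [:: ((i.+1)%:Z, SC i)]
  | SY => LEy
  | SNY => LNy
  end.

Definition lin (l : seq (int * sym m)) (x : V) : int := \sum_(q <- l) q.1 * phi q.2 x.

End Y.
Variable n : nat.
Hypotheses (hA : srg eA n d lam mu) (hB : srg eB n d lam mu)
  (ipa : injective pa) (ipb : injective pb)
  (htau : forall i, tau1 eA pa (pa i) = tau1 eB pb (pb i)).

Lemma padjB i j : eB (pb i) (pb j) = eA (pa i) (pa j).
Proof.
move: (congr1 (fun t : ctype m => t.2 (Some j)) (htau i)); rewrite /= (tau_adj eA ipa) (tau_adj eB ipb).
by case: (eA _ _); case: (eB _ _).
Qed.

Lemma sum_enum (F : 'I_m -> int) : \sum_(j <- Finite.enum 'I_m) F j = \sum_j F j.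
Proof. by rewrite unlock. Qed.

Lemma veqE x z : (x == z) = veq x z.
Proof.
case: x => [[[a|b]|i]|p]; case: z => [[[a'|b']|j]|q] /=;
  try (by apply/eqP/eqP => [[]|->]); by apply/negbTE/eqP => H; inversion H.
Qed.

Lemma sumP (i j : 'I_m) (h' : 'I_i.+1) :
  \sum_(h : 'I_j.+1) ib (existT (fun k : 'I_m => 'I_k.+1) j h == existT _ i h') = ib (j == i).
Proof.
case: (eqVneq j i) => [e|ne].
  subst j; rewrite ?eqxx ibT -(sum_ib1 h' (fun _ => 1)); apply: eq_bigr => h _.
  by rewrite eq_Tagged /= mulr1.
rewrite big1 ?ibF // => h _; case E: (_ == _) => //.
by move: (eq_tag E) => /= ej; rewrite ej eqxx in ne.
Qed.

Lemma sum_pcolA (u : VA) (F : 'I_m -> int) :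
  \sum_j ib (u == pa j) * F j = (if pcol pa u is Some k then F k else 0).
Proof.
rewrite /pcol; case: pickP => [k /eqP <- | H].
  by under eq_bigr do rewrite (inj_eq ipa); rewrite sum_ib1'.
by rewrite big1 // => j _; rewrite eq_sym H ibF mul0r.
Qed.

Lemma sum_pcolB (u : VB) (F : 'I_m -> int) :
  \sum_j ib (u == pb j) * F j = (if pcol pb u is Some k then F k else 0).
Proof.
rewrite /pcol; case: pickP => [k /eqP <- | H].
  by under eq_bigr do rewrite (inj_eq ipb); rewrite sum_ib1'.
by rewrite big1 // => j _; rewrite eq_sym H ibF mul0r.
Qed.

Lemma keyL y s x : \sum_z ib (G x z) * phi y s z = lin y (Lfun y s) x.
Proof.
rewrite nbrsE /lin.
have [[seA _ _] _] := hA; have [[seB _ _] _] := hB.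
case: s => [[] i|[] i|[]|i|i| |]; case: x => [[[a|b]|j]|[j h]];
  rewrite /= ?big_cons ?big_nil ?big_map /= ?sum_enum.
all: rewrite ?ibF ?ibT ?mulr0 ?mul0r ?mulr1 ?mul1r ?addr0 ?add0r //.
all: rewrite ?sum_mul0 ?big1_eq ?addr0 ?add0r ?sum_ib1r ?sum_ib1r' ?sum_ib1 ?sum_ib1' ?(inj_eq ipa) ?(inj_eq ipb) ?padjB //.
all: try (by rewrite [in LHS]seA).
all: try (by rewrite [in LHS]seB).
all: rewrite ?sum_mul1 ?(srg_deg hA) ?(srg_deg hB) ?(srg_common hA) ?(srg_common hB) -?addrA //.
  case: (eqVneq j i) => [->|_]; rewrite sumr_const card_ord.
    by rewrite -mulr_natl natz.
  by rewrite ibF mul0rn mulr0.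
all: rewrite /LEy /LNy; case: y => [[[u|u]|k]|[k hk]]; rewrite /= ?big_cons ?big_nil ?big_map /= ?sum_enum.
all: rewrite ?veqE /= ?andbT ?andbF ?ibF ?ibT ?sum_mul0 ?big1_eq ?mulr0 ?mul0r ?mulr1 ?mul1r ?addr0 ?add0r //.
all: rewrite ?sum_ib1r ?sum_ib1r' ?sumP ?(srg_common hA) ?(srg_common hB) -?addrA //.
all: rewrite -?(pcolE ipa) -?(pcolE ipb).
all: try (case: (pcol _ _) => [k'|]; rewrite /= ?big_cons ?big_nil /= ?ibF ?ibT ?mulr0 ?mul1r ?addr0 ?add0r //).
all: try (by rewrite seA).
all: try (by rewrite seB).
all: by congr ib; apply/eqP/eqP => [[->]|->].
Qed.
Definition step y (l : seq (int * sym m)) : seq (int * sym m) :=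
  flatten [seq [seq (q.1 * r.1, r.2) | r <- Lfun y q.2] | q <- l].
Definition wl y k := iter k (step y) [:: (1, SY)].

Lemma lin_step y l x : lin y (step y l) x = \sum_(q <- l) q.1 * lin y (Lfun y q.2) x.
Proof.
rewrite /lin /step big_flatten /= big_map; apply: eq_bigr => q _.
rewrite big_map big_distrr; apply: eq_bigr => r _ /=; by rewrite mulrA.
Qed.

Lemma lin_nbr y l x : \sum_z ib (G x z) * lin y l z =
  \sum_(q <- l) q.1 * \sum_z ib (G x z) * phi y q.2 z.
Proof.
rewrite /lin; under eq_bigr do rewrite big_distrr.
rewrite exchange_big; apply: eq_bigr => q _; rewrite big_distrr.
by apply: eq_bigr => z _ /=; rewrite mulrCA.
Qed.

Lemma walks_eq y k x : (nwalks G k x y : int) = lin y (wl y k) x.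
Proof.
elim: k x => [|k IH] x.
  by rewrite nwalks0 /lin /wl /= big_cons big_nil /= mul1r addr0 veqE.
rewrite nwalksS (big_morph Posz PoszD (erefl 0%:Z)).
under eq_bigr do rewrite PoszM IH.
by rewrite lin_nbr /wl iterS lin_step; apply: eq_bigr => q _; rewrite keyL.
Qed.
End Gen.

Lemma nwalks_iso (V V2 : finType) (e : rel V) (e2 : rel V2) (f : V -> V2) :
  bijective f -> (forall u v, e2 (f u) (f v) = e u v) ->
  forall k x y, nwalks e2 k (f x) (f y) = nwalks e k x y.
Proof.
move=> bf he; elim=> [|k IH] x y; first by rewrite !nwalks0 (inj_eq (bij_inj bf)).
rewrite !nwalksS (reindex f) /=; last by apply: onW_bij.
by apply: eq_bigr => z _; rewrite he IH.
Qed.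

Definition sw (VA VB : finType) m (v : gvert VA VB m) : gvert VB VA m :=
  match v with
  | vA a => vB a
  | vB b => vA b
  | vC i => vC i
  | inr p => inr p
  end.

Lemma swK (VA VB : finType) m (v : gvert VA VB m) : sw (sw v) = v.
Proof. by case: v => [[[a|b]|i]|p]. Qed.

Lemma sw_bij (VA VB : finType) m : bijective (@sw VA VB m).
Proof. by exists (@sw VB VA m) => v; rewrite swK. Qed.

Lemma gadj_sw (VA VB : finType) m eA eB (pa : 'I_m -> VA) (pb : 'I_m -> VB) u v :
  gadj eB eA pb pa (sw u) (sw v) = gadj eA eB pa pb u v.
Proof. by case: u => [[[a|b]|i]|[i h]]; case: v => [[[a'|b']|j]|[j h']]. Qed.

Definition side (VA VB : finType) m (v : gvert VA VB m) : option bool :=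
  match v with vA _ => Some false | vB _ => Some true | _ => None end.

Lemma tau_eq_pcol (V V2 : finType) m (e : rel V) (e2 : rel V2) p p2 u u2 :
  @tau1 V m e p u = @tau1 V2 m e2 p2 u2 -> pcol p u = pcol p2 u2.
Proof. by move=> /(congr1 fst). Qed.

Lemma tau_eq_adj (V V2 : finType) m (e : rel V) (e2 : rel V2) p p2 u u2 :
  injective p -> injective p2 ->
  @tau1 V m e p u = @tau1 V2 m e2 p2 u2 -> forall j, e u (p j) = e2 u2 (p2 j).
Proof.
move=> ip ip2 H j.
move: (congr1 (fun t : ctype m => t.2 (Some j)) H); rewrite /= (tau_adj e ip) (tau_adj e2 ip2).
by case: (e _ _); case: (e2 _ _).
Qed.

Lemma tau_eq_idx (V V2 : finType) m (e : rel V) (e2 : rel V2) p p2 i j :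
  injective p -> injective p2 ->
  @tau1 V m e p (p i) = @tau1 V2 m e2 p2 (p2 j) -> i = j.
Proof. by move=> ip ip2 /tau_eq_pcol; rewrite !pcolP // => -[]. Qed.

Lemma Dpart_sym (VA VB : finType) m (u v : gvert VA VB m) : Dpart u v = Dpart v u.
Proof. by case: u => [[[a|b]|i]|[i h]]; case: v => [[[a'|b']|j]|[j h']]. Qed.

Lemma gadj_sym (VA VB : finType) m eA eB (pa : 'I_m -> VA) (pb : 'I_m -> VB) u v :
  symmetric eA -> symmetric eB -> gadj eA eB pa pb u v = gadj eA eB pa pb v u.
Proof.
by move=> sA sB; case: u => [[[a|b]|i]|[i h]]; case: v => [[[a'|b']|j]|[j h']] //=;
  rewrite ?sA ?sB // eq_sym.
Qed.

Section Al.
Variables (n d lam mu m : nat)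
  (VA VB : finType) (eA : rel VA) (eB : rel VB) (pa : 'I_m -> VA) (pb : 'I_m -> VB)
  (VA2 VB2 : finType) (eA2 : rel VA2) (eB2 : rel VB2)
  (pa2 : 'I_m -> VA2) (pb2 : 'I_m -> VB2)
  (hA : srg eA n d lam mu) (hB : srg eB n d lam mu)
  (hA2 : srg eA2 n d lam mu) (hB2 : srg eB2 n d lam mu)
  (ipa : injective pa) (ipb : injective pb)
  (ipa2 : injective pa2) (ipb2 : injective pb2)
  (htau : forall i, tau1 eA pa (pa i) = tau1 eB pb (pb i))
  (htau2 : forall i, tau1 eA2 pa2 (pa2 i) = tau1 eB2 pb2 (pb2 i))
  (htauA : forall i, tau1 eA pa (pa i) = tau1 eA2 pa2 (pa2 i)).

Lemma aligned (x y : gvert VA VB m) (x2 y2 : gvert VA2 VB2 m)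
  (heta : [/\ gtau eA eB pa pb x = gtau eA2 eB2 pa2 pb2 x2,
              Dpart x y = Dpart x2 y2,
              (x == y) = (x2 == y2),
              gadj eA eB pa pb x y = gadj eA2 eB2 pa2 pb2 x2 y2
            & gtau eA eB pa pb y = gtau eA2 eB2 pa2 pb2 y2])
  (sx : side x = side x2) (sy : side y = side y2) :
  forall k, nwalks (gadj eA eB pa pb) k x y = nwalks (gadj eA2 eB2 pa2 pb2) k x2 y2.
Proof.
case: heta => gx dxy exy axy gy k.
have [[seA _ _] _] := hA; have [[seB _ _] _] := hB.
have [[seA2 _ _] _] := hA2; have [[seB2 _ _] _] := hB2.
have padjE i j : eA (pa i) (pa j) = eA2 (pa2 i) (pa2 j) := tau_eq_adj ipa ipa2 (htauA i) j.
have Lq : forall s, Lfun eA eB pa pb d lam mu y s = Lfun eA2 eB2 pa2 pb2 d lam mu y2 s.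
  case=> [b i|b i|b|i|i| |] //=.
  - by congr (_ :: _ :: _ :: _); apply: eq_map => j; rewrite padjE.
  - rewrite /LEy; clear dxy exy axy; move: gy sy.
    case: y => [[[u|u]|i]|[i h]]; case: y2 => [[[u2|u2]|j]|[j h']] gy' sy';
      try discriminate sy'; try discriminate gy'; case: gy' => E _ /=.
    + by rewrite E.
    + by rewrite E.
    + by move: E; rewrite !pcolP // => -[->].
    + by move: E; rewrite !pcolP // => -[->].
  - rewrite /LNy; clear dxy exy axy; move: gy sy.
    case: y => [[[u|u]|i]|[i h]]; case: y2 => [[[u2|u2]|j]|[j h']] gy' sy';
      try discriminate sy'; try discriminate gy'; case: gy' => E1 E2 //=.
    + have E : tau1 eA pa u = tau1 eA2 pa2 u2 by rewrite /tau1 E1 E2.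
      congr (_ :: _ :: _ :: _); apply: eq_map => j.
      by rewrite (tau_eq_adj ipa ipa2 E).
    + have E : tau1 eB pb u = tau1 eB2 pb2 u2 by rewrite /tau1 E1 E2.
      congr (_ :: _ :: _ :: _); apply: eq_map => j.
      by rewrite (tau_eq_adj ipb ipb2 E).
have Pq : forall s, phi eA eB pa pb y s x = phi eA2 eB2 pa2 pb2 y2 s x2.
{ case=> [[] i|[] i|[]|i|i| |]; last first.
  - by rewrite /= Dpart_sym (Dpart_sym y2) (gadj_sym _ _ y) // (gadj_sym _ _ y2) // dxy axy.
  - by rewrite /= -!veqE exy.
  all: clear Lq dxy exy axy gy sy; move: gx sx.
  all: case: x => [[[a|a]|j]|[j h]]; case: x2 => [[[a2|a2]|j2]|[j2 h2]] gx' sx';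
      try discriminate sx'; try discriminate gx'; case: gx' => E1 E2 //=.
  all: try (by rewrite eq_sym -(pcolE ipa) E1 (pcolE ipa2) eq_sym).
  all: try (by rewrite eq_sym -(pcolE ipb) E1 (pcolE ipb2) eq_sym).
  all: try (by move: E1; rewrite !pcolP // => -[->]).
  - have E : tau1 eA pa a = tau1 eA2 pa2 a2 by rewrite /tau1 E1 E2.
    by rewrite seA seA2 (tau_eq_adj ipa ipa2 E).
  - have E : tau1 eB pb a = tau1 eB2 pb2 a2 by rewrite /tau1 E1 E2.
    by rewrite seB seB2 (tau_eq_adj ipb ipb2 E). }
have Wq : forall k, wl eA eB pa pb d lam mu y k = wl eA2 eB2 pa2 pb2 d lam mu y2 k.
  elim=> //= k' ->; rewrite /step; congr flatten; apply: eq_map => q.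
  by rewrite Lq.
suff : (nwalks (gadj eA eB pa pb) k x y : int) = nwalks (gadj eA2 eB2 pa2 pb2) k x2 y2.
  by case.
rewrite (walks_eq hA hB ipa ipb htau) (walks_eq hA2 hB2 ipa2 ipb2 htau2) Wq.
by rewrite /lin; apply: eq_bigr => q _; rewrite Pq.
Qed.
End Al.

Lemma gtau_sw (VA VB : finType) m eA eB (pa : 'I_m -> VA) (pb : 'I_m -> VB) :
  (forall i, tau1 eA pa (pa i) = tau1 eB pb (pb i)) ->
  forall v, gtau eB eA pb pa (sw v) = gtau eA eB pa pb v.
Proof. by move=> ht; case=> [[[a|b]|i]|[i h]] //=; rewrite ht. Qed.

Lemma Dpart_sw (VA VB : finType) m (u v : gvert VA VB m) : Dpart (sw u) (sw v) = Dpart u v.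
Proof. by case: u => [[[a|b]|i]|[i h]]; case: v => [[[a'|b']|j]|[j h']]. Qed.

Lemma align_cases (VA VB VA2 VB2 : finType) m eA eB (pa : 'I_m -> VA) (pb : 'I_m -> VB)
  eA2 eB2 (pa2 : 'I_m -> VA2) (pb2 : 'I_m -> VB2) x y x2 y2 :
  gtau eA eB pa pb x = gtau eA2 eB2 pa2 pb2 x2 -> Dpart x y = Dpart x2 y2 ->
  gtau eA eB pa pb y = gtau eA2 eB2 pa2 pb2 y2 ->
  (side x = side x2 /\ side y = side y2) \/ (side x = side (sw x2) /\ side y = side (sw y2)).
Proof.
case: x => [[[a|a]|i]|[i h]]; case: x2 => [[[a2|a2]|j]|[j h']]; move=> gx;
  try discriminate gx;
  case: y => [[[u|u]|k]|[k hk]]; case: y2 => [[[u2|u2]|k2]|[k2 hk2]] dxy gy;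
  try discriminate gy; try discriminate dxy; by [left | right].
Qed.

Close Scope ring_scope.

Theorem claim2
  (n d lam mu m : nat)
  (VA VB : finType) (eA : rel VA) (eB : rel VB) (pa : 'I_m -> VA) (pb : 'I_m -> VB)
  (VA2 VB2 : finType) (eA2 : rel VA2) (eB2 : rel VB2)
  (pa2 : 'I_m -> VA2) (pb2 : 'I_m -> VB2)
  (hA : srg eA n d lam mu) (hB : srg eB n d lam mu)
  (hA2 : srg eA2 n d lam mu) (hB2 : srg eB2 n d lam mu)
  (ipa : injective pa) (ipb : injective pb)
  (ipa2 : injective pa2) (ipb2 : injective pb2)
  (htau : forall i, tau1 eA pa (pa i) = tau1 eB pb (pb i))
  (htau2 : forall i, tau1 eA2 pa2 (pa2 i) = tau1 eB2 pb2 (pb2 i))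
  (htauA : forall i, tau1 eA pa (pa i) = tau1 eA2 pa2 (pa2 i))
  (x y : gvert VA VB m) (x2 y2 : gvert VA2 VB2 m)
  (heta : [/\ gtau eA eB pa pb x = gtau eA2 eB2 pa2 pb2 x2,
              Dpart x y = Dpart x2 y2,
              (x == y) = (x2 == y2),
              gadj eA eB pa pb x y = gadj eA2 eB2 pa2 pb2 x2 y2
            & gtau eA eB pa pb y = gtau eA2 eB2 pa2 pb2 y2]) :
  forall k, nwalks (gadj eA eB pa pb) k x y = nwalks (gadj eA2 eB2 pa2 pb2) k x2 y2.
Proof.
move=> k; have [gx dxy exy axy gy] := heta.
have [[sx sy]|[sx sy]] := align_cases gx dxy gy.
  exact: (aligned hA hB hA2 hB2 ipa ipb ipa2 ipb2 htau htau2 htauA heta sx sy).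
rewrite -(nwalks_iso (sw_bij VA2 VB2 m) (gadj_sw eA2 eB2 pa2 pb2)).
have htau2' i : tau1 eB2 pb2 (pb2 i) = tau1 eA2 pa2 (pa2 i) by rewrite htau2.
have htauA' i : tau1 eA pa (pa i) = tau1 eB2 pb2 (pb2 i) by rewrite htauA htau2.
apply: (aligned hA hB hB2 hA2 ipa ipb ipb2 ipa2 htau htau2' htauA' _ sx sy).
rewrite !(gtau_sw htau2) Dpart_sw (inj_eq (bij_inj (sw_bij VA2 VB2 m))) gadj_sw.
by split.
Qed.
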